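(* Let $R$ be a Lucas rod set $[1^s,2^t]$ or $[\bar1^s,2^t]$. For each of the following pairs of positive integers $a<b$ there exist a finite rod set $Q$ and a rod set $S$ of shape $\langle a,b\rangle$ with $R\xrightarrow{Q}S$, and $S$ is unique up to equivalence: (1) $b=a+1$, for any $a\ge1$; (2) $b=a+2$, when $s=1$ or $a$ is even; (3) $a=kd$, $b=(k+1)d$, for any integers $d\ge3$ and $k\ge1$.
   Context: A rod is a triple $(r,c,\varepsilon)$ with $r$ a positive integer (length), $c$ a tag (color), $\varepsilon\in\{\pm1\}$ (sign); antirods have sign $-1$. A rod set is a set of rods with finitely many of each length. A Lucas rod set is $[1^s,2^t]$ ($s$ positive rods of length 1, $t$ positive rods of length 2) or $[\bar1^s,2^t]$ ($s$ antirods of length 1, $t$ positive rods of length 2), with $s,t$ relatively prime positive integers. $C(n,R)$ = (number of positive rods of length $n$) $-$ (number of antirods of length $n$); $R\equiv S$ means $C(n,R)=C(n,S)$ for all $n>0$. A rod set is finite if its reduced equivalent (no rod and antirod of the same length) is finite. The shape of $S$ is the set of lengths $n$ with $C(n,S)\ne0$; shape $\langle a,b\rangle$ means this set is $\{a,b\}$. Unions are disjoint unions; $\overline{Q}$ reverses all signs; $QR$ has one rod per pair $(q,r)\in Q\times R$ of length $\operatorname{len}q+\operatorname{len}r$ and sign $\operatorname{sign}q\operatorname{sign}r$. $R\xrightarrow{Q}S$ means $S\equiv R\cup\overline{Q}\cup QR$. *)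

(* Defs.v *)
From mathcomp Require Import all_boot all_order all_algebra.
Set Implicit Arguments. Unset Strict Implicit. Unset Printing Implicit Defensive.
Import Order.TTheory GRing.Theory Num.Theory.

(* A rod set, up to renaming of colours: for each length n >= 1,
   [rpos R n] positive rods and [rneg R n] antirods of length n.
   (The value at index 0 is irrelevant: lengths are positive.) *)
Record rodset := RodSet { rpos : nat -> nat; rneg : nat -> nat }.

Definition C (n : nat) (R : rodset) : int := (rpos R n)%:Z - (rneg R n)%:Z.

Definition rod_equiv (R S : rodset) : Prop :=
  forall n : nat, (0 < n)%N -> C n R = C n S.

Definition rod_union (R S : rodset) : rodset :=
  RodSet (fun n => rpos R n + rpos S n)%N (fun n => rneg R n + rneg S n)%N.

Definition rod_bar (Q : rodset) : rodset := RodSet (rneg Q) (rpos Q).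

(* QR: one rod per pair (q,r), length len q + len r, sign sign q * sign r *)
Definition rod_prod (Q R : rodset) : rodset :=
  RodSet
    (fun n => \sum_(1 <= i < n) (rpos Q i * rpos R (n - i) + rneg Q i * rneg R (n - i)))%N
    (fun n => \sum_(1 <= i < n) (rpos Q i * rneg R (n - i) + rneg Q i * rpos R (n - i)))%N.

(* finite: the reduced equivalent (|C(n,R)| rods of length n) is finite *)
Definition rod_finite (R : rodset) : Prop :=
  exists N : nat, forall n : nat, (N < n)%N -> C n R = 0.

Definition has_shape2 (S : rodset) (a b : nat) : Prop :=
  forall n : nat, (0 < n)%N -> (C n S <> 0 <-> n = a \/ n = b).

Definition rod_step (R Q S : rodset) : Prop :=
  rod_equiv S (rod_union (rod_union R (rod_bar Q)) (rod_prod Q R)).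

(* Lucas rod sets: [1^s,2^t] (anti = false) and [\bar1^s,2^t] (anti = true) *)
Definition lucas (anti : bool) (s t : nat) : rodset :=
  RodSet (fun n => if n == 1%N then (if anti then 0 else s)
                   else if n == 2%N then t else 0)%N
         (fun n => if (n == 1%N) && anti then s else 0)%N.

(* Main.v *)
Require Import Defs.
From mathcomp Require Import all_boot all_order all_algebra.
From mathcomp Require Import ring lra zify.
Set Implicit Arguments. Unset Strict Implicit. Unset Printing Implicit Defensive.
Import Order.TTheory GRing.Theory Num.Theory.
Local Open Scope ring_scope.

Fixpoint Luc (e t : int) (n : nat) : int :=
  match n with
  | 0%N => 0
  | 1%N => 1
  | S (S m as p) => e * Luc e t p + t * Luc e t m
  end.

Lemma L0 e t : Luc e t 0%N = 0. Proof. by []. Qed.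
Lemma L1 e t : Luc e t 1%N = 1. Proof. by []. Qed.
Lemma LSS e t n : Luc e t n.+2 = e * Luc e t n.+1 + t * Luc e t n.
Proof. by []. Qed.

Lemma Luc_add e t m n :
  Luc e t (m + n).+1 = Luc e t m.+1 * Luc e t n.+1 + t * Luc e t m * Luc e t n.
Proof.
elim: m n => [|m IH] n.
  by rewrite add0n L1 L0 mul1r mulr0 mul0r addr0.
rewrite addSn; have := IH n.+1; rewrite addnS => ->.
rewrite !LSS; ring.
Qed.

Lemma Luc_dvd e t d k : (Luc e t d %| Luc e t (k * d))%Z.
Proof.
elim: k => [|k IH]; first by rewrite mul0n L0 dvdz0.
case: d IH => [|d] IH; first by rewrite muln0 dvdzz.
rewrite mulSn addnC addnS Luc_add.
apply: rpredD; first exact: dvdz_mull.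
by apply: dvdz_mulr; apply: dvdz_mull.
Qed.

Lemma Luc_W e t a d :
  Luc e t (a + d).+1 * Luc e t d - Luc e t (a + d) * Luc e t d.+1
  = - ((- t) ^+ d) * Luc e t a.
Proof.
elim: d => [|d IH].
  by rewrite addn0 L0 L1 expr0; ring.
rewrite addnS !LSS.
transitivity (- t * (Luc e t (a + d).+1 * Luc e t d - Luc e t (a + d) * Luc e t d.+1)).
  ring.
rewrite IH exprS; ring.
Qed.

Lemma Luc_neg e t n : Luc (- e) t n = (-1) ^+ n.+1 * Luc e t n.
Proof.
suff: Luc (- e) t n = (-1) ^+ n.+1 * Luc e t n /\
      Luc (- e) t n.+1 = (-1) ^+ n.+2 * Luc e t n.+1 by case.
elim: n => [|n [H1 H2]]; first by rewrite !L0 !L1 mulr0 expr2 mulN1r opprK mulr1.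
split=> //; rewrite !LSS H1 H2 !exprS; ring.
Qed.

Lemma Luc_pos (s t : int) n : 0 < s -> 0 <= t -> 0 < Luc s t n.+1.
Proof.
move=> hs ht.
suff: 0 <= Luc s t n /\ 0 < Luc s t n.+1 by case.
elim: n => [|n [H1 H2]]; first by rewrite L0 L1.
split; first exact: ltW.
rewrite LSS.
have h1 : 0 < s * Luc s t n.+1 by apply: mulr_gt0.
have h2 : 0 <= t * Luc s t n by apply: mulr_ge0.
lra.
Qed.

Definition ee (anti : bool) (s : nat) : int := if anti then - (s%:Z) else s%:Z.

Lemma Luc_neq0 anti s (t : nat) n : (0 < s)%N -> (0 < n)%N ->
  Luc (ee anti s) t%:Z n != 0.
Proof.
move=> hs; case: n => // n _.
have hp : 0 < Luc s%:Z t%:Z n.+1 by apply: Luc_pos; rewrite ?ltz_nat.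
case: anti; rewrite /ee; last by rewrite gt_eqF.
rewrite Luc_neg; apply: mulf_neq0; last by rewrite gt_eqF.
by rewrite expf_neq0 // oppr_eq0 oner_neq0.
Qed.

Lemma C_union n R S : C n (rod_union R S) = C n R + C n S.
Proof. rewrite /C /= !PoszD; ring. Qed.

Lemma C_bar n Q : C n (rod_bar Q) = - C n Q.
Proof. by rewrite /C /= opprB. Qed.

Lemma C_prod n Q R :
  C n (rod_prod Q R) = \sum_(1 <= i < n) C i Q * C (n - i) R.
Proof.
rewrite /C /= -!natz !natr_sum -sumrB; apply: eq_bigr => i _.
rewrite -!natz !natrD !natrM; ring.
Qed.

Lemma C_lucas anti s t n : C n (lucas anti s t) =
  if n == 1%N then ee anti s else if n == 2%N then t%:Z else 0.
Proof.
rewrite /C /lucas /ee; case: anti; case: n => [|[|[|n]]] //=;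
  rewrite ?subr0 ?sub0r //.
Qed.

Definition mkrod (g : nat -> int) : rodset :=
  RodSet (fun n => if 0 <= g n then `|g n|%N else 0%N)
         (fun n => if 0 <= g n then 0%N else `|g n|%N).

Lemma C_mkrod g n : C n (mkrod g) = g n.
Proof.
rewrite /C /=; case: ifP => h; first by rewrite subr0 gez0_abs.
by rewrite sub0r ltz0_abs ?opprK // ltNge h.
Qed.

Definition fof (Q : rodset) (n : nat) : int :=
  match n with 0%N => 0 | 1%N => 1 | k.+2 => C k.+1 Q end.

Lemma rhsC anti s t Q m :
  C m.+1 (rod_union (rod_union (lucas anti s t) (rod_bar Q)) (rod_prod Q (lucas anti s t)))
  = ee anti s * fof Q m.+1 + t%:Z * fof Q m - fof Q m.+2.
Proof.
rewrite !C_union C_bar C_prod.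
case: m => [|[|m]].
- rewrite big_geq // C_lucas /=; ring.
- rewrite big_nat1 !C_lucas /=; ring.
- rewrite big_nat_recr //= big_nat_recr //=.
  rewrite big_nat_cond big1 => [|i /andP[/andP[_ hi] _]]; last first.
    have h1 : (m.+3 - i == 1)%N = false by apply/negbTE/eqP; lia.
    have h2 : (m.+3 - i == 2)%N = false by apply/negbTE/eqP; lia.
    by rewrite C_lucas h1 h2 mulr0.
  have -> : (m.+3 - m.+1 = 2)%N by lia.
  have -> : (m.+3 - m.+2 = 1)%N by lia.
  rewrite !C_lucas /=; ring.
Qed.

Lemma step_iff anti s t Q S : rod_step (lucas anti s t) Q S <->
  forall m, C m.+1 S = ee anti s * fof Q m.+1 + t%:Z * fof Q m - fof Q m.+2.
Proof.
split=> H.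
  by move=> m; rewrite -rhsC; apply: H.
by case=> // m _; rewrite rhsC.
Qed.

Lemma zero_rec (e t : int) (g : nat -> int) : g 0%N = 0 -> g 1%N = 0 ->
  (forall m, g m.+2 = e * g m.+1 + t * g m) -> forall n, g n = 0.
Proof.
move=> g0 g1 H n.
suff: g n = 0 /\ g n.+1 = 0 by case.
elim: n => [|n [H1 H2]]; first by [].
by split=> //; rewrite H H1 H2; ring.
Qed.

Definition G e t a n := Luc e t (n - a).

Lemma G_rec e t a m :
  G e t a m.+2 = e * G e t a m.+1 + t * G e t a m + (if m.+1 == a then 1 else 0).
Proof.
rewrite /G; case: (ltngtP m.+1 a) => h.
- have -> : (m.+2 - a = 0)%N by lia.
  have -> : (m.+1 - a = 0)%N by lia.
  have -> : (m - a = 0)%N by lia.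
  rewrite L0; ring.
- have -> : (m.+2 - a = (m - a).+2)%N by lia.
  have -> : (m.+1 - a = (m - a).+1)%N by lia.
  rewrite LSS; ring.
- subst a.
  have -> : (m.+2 - m.+1 = 1)%N by lia.
  have -> : (m.+1 - m.+1 = 0)%N by lia.
  have -> : (m - m.+1 = 0)%N by lia.
  rewrite L0 L1; ring.
Qed.

Definition sh (x y : int) (a b n : nat) : int :=
  (if n == a then x else 0) + (if n == b then y else 0).

Definition F e t x y a b n := Luc e t n - x * G e t a n - y * G e t b n.

Lemma F_rec e t x y a b m :
  F e t x y a b m.+2 = e * F e t x y a b m.+1 + t * F e t x y a b m - sh x y a b m.+1.
Proof.
rewrite /F !G_rec LSS /sh; case: (m.+1 == a); case: (m.+1 == b); ring.
Qed.

Lemma F0 e t x y a b : F e t x y a b 0 = 0.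
Proof. by rewrite /F /G !sub0n L0; ring. Qed.

Lemma F1 e t x y a b : (0 < a)%N -> (0 < b)%N -> F e t x y a b 1 = 1.
Proof.
move=> ha hb; rewrite /F /G.
have -> : (1 - a = 0)%N by lia.
have -> : (1 - b = 0)%N by lia.
rewrite L0 L1; ring.
Qed.

Lemma shape_rep S a b : has_shape2 S a b -> a != b ->
  forall n, (0 < n)%N -> C n S = sh (C a S) (C b S) a b n.
Proof.
move=> hs hab n hn; rewrite /sh.
case: eqP => [->|na]; first by rewrite (negbTE hab) addr0.
case: eqP => [->|nb]; first by rewrite add0r.
rewrite addr0; case: (C n S =P 0) => // /(hs n hn).1 [] //.
Qed.

Lemma rep anti s t a b Q S : (0 < a)%N -> (a < b)%N ->
  has_shape2 S a b -> rod_step (lucas anti s t) Q S ->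
  forall n, fof Q n = F (ee anti s) t%:Z (C a S) (C b S) a b n.
Proof.
move=> ha hab hs /step_iff hst.
have hr := shape_rep hs (negbT (ltn_eqF hab)).
pose g n := fof Q n - F (ee anti s) t%:Z (C a S) (C b S) a b n.
suff: forall n, g n = 0 by move=> H n; apply/eqP; rewrite -subr_eq0; apply/eqP/H.
apply: (zero_rec (e := ee anti s) (t := t%:Z)).
- by rewrite /g F0 subrr.
- by rewrite /g F1 ?subrr //; apply: leq_trans hab.
- move=> m; rewrite /g F_rec -hr //.
  have := hst m; move: (fof Q m.+2) => z ->; ring.
Qed.

Lemma det_lemma anti s (t : nat) a b (X Y : int) N : (0 < s)%N -> (0 < t)%N ->
  (0 < a)%N -> (a < b)%N ->
  (forall n, (N <= n)%N -> X * G (ee anti s) t%:Z a n + Y * G (ee anti s) t%:Z b n = 0) ->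
  X = 0 /\ Y = 0.
Proof.
move=> hs ht ha hab H.
set e := ee anti s; set U := Luc e t%:Z.
set d := (b - a)%N; set m := N.+1.
have h1 := H (m + b)%N (ltac:(rewrite /m; lia)).
have h2 := H (m.+1 + b)%N (ltac:(rewrite /m; lia)).
rewrite /G in h1 h2.
have E1 : (m + b - a = m + d)%N by rewrite /d; lia.
have E2 : (m + b - b = m)%N by lia.
have E3 : (m.+1 + b - a = (m + d).+1)%N by rewrite /d; lia.
have E4 : (m.+1 + b - b = m.+1)%N by lia.
rewrite E1 E2 in h1.
rewrite E3 E4 in h2.
have W := Luc_W e t%:Z d m; rewrite addnC in W.
have hX : X * (- ((- t%:Z) ^+ m) * Luc e t%:Z d) = 0.
  rewrite -W.
  transitivity ((X * Luc e t%:Z (m + d).+1 + Y * Luc e t%:Z m.+1) * Luc e t%:Z m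
       - (X * Luc e t%:Z (m + d) + Y * Luc e t%:Z m) * Luc e t%:Z m.+1); first ring.
  by rewrite h1 h2; ring.
have dpos : (0 < d)%N by rewrite /d; lia.
have X0 : X = 0.
  move/eqP: hX; rewrite mulf_eq0 => /orP[/eqP //|].
  rewrite mulf_eq0 oppr_eq0 expf_eq0 oppr_eq0 (negbTE (@Luc_neq0 anti s t d hs dpos)) orbF.
  by move/andP=> [_]; rewrite eqz_nat => /eqP ht0; rewrite ht0 in ht.
split=> //; move: h1; rewrite X0 mul0r add0r => /eqP; rewrite mulf_eq0.
by rewrite (negbTE (@Luc_neq0 anti s t m hs isT)) orbF => /eqP.
Qed.

Lemma eventual anti s t a b Q S : (0 < a)%N -> (a < b)%N ->
  rod_finite Q -> has_shape2 S a b -> rod_step (lucas anti s t) Q S ->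
  exists N, forall n, (N <= n)%N -> F (ee anti s) t%:Z (C a S) (C b S) a b n = 0.
Proof.
move=> ha hab [N0 hN] hs hst; exists N0.+2 => n hn.
rewrite -(rep ha hab hs hst).
case: n hn => [|[|k]] hn //; apply: hN; lia.
Qed.

Lemma uniq_gen anti s t a b : (0 < s)%N -> (0 < t)%N -> (0 < a)%N -> (a < b)%N ->
  forall Q1 S1 Q2 S2 : rodset,
        rod_finite Q1 -> has_shape2 S1 a b -> rod_step (lucas anti s t) Q1 S1 ->
        rod_finite Q2 -> has_shape2 S2 a b -> rod_step (lucas anti s t) Q2 S2 ->
        rod_equiv S1 S2.
Proof.
move=> hs ht ha hab Q1 S1 Q2 S2 f1 sh1 st1 f2 sh2 st2.
have [N1 H1] := eventual ha hab f1 sh1 st1.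
have [N2 H2] := eventual ha hab f2 sh2 st2.
have key : forall n, (N1 + N2 <= n)%N ->
   (C a S1 - C a S2) * G (ee anti s) t%:Z a n + (C b S1 - C b S2) * G (ee anti s) t%:Z b n = 0.
  move=> n hn.
  have e1 := H1 n (ltac:(lia)); have e2 := H2 n (ltac:(lia)).
  rewrite /F in e1 e2.
  transitivity ((Luc (ee anti s) t n - C a S2 * G (ee anti s) t a n - C b S2 * G (ee anti s) t b n)
     - (Luc (ee anti s) t n - C a S1 * G (ee anti s) t a n - C b S1 * G (ee anti s) t b n)).
    ring.
  by rewrite e1 e2 subrr.
have [X0 Y0] := det_lemma hs ht ha hab key.
move=> n hn.
have hab' : a != b by rewrite neq_ltn hab.
rewrite (shape_rep sh1 hab' hn) (shape_rep sh2 hab' hn).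
by rewrite (subr0_eq X0) (subr0_eq Y0).
Qed.

Lemma exist_gen anti s t a b : (0 < s)%N -> (0 < t)%N -> (0 < a)%N -> (a < b)%N ->
  (Luc (ee anti s) t%:Z (b - a) %| Luc (ee anti s) t%:Z b)%Z ->
  exists Q S : rodset, rod_finite Q /\ has_shape2 S a b /\ rod_step (lucas anti s t) Q S.
Proof.
move=> hs ht ha hab H.
set e := ee anti s; set U := Luc e t%:Z; set d := (b - a)%N.
have dpos : (0 < d)%N by rewrite /d; lia.
set x := (U b %/ U d)%Z.
have hx : x * U d = U b := divzK H.
set y := U b.+1 - x * U d.+1.
set f := F e t%:Z x y a b.
exists (mkrod (fun n => f n.+1)), (mkrod (sh x y a b)).
have fofQ : forall n, fof (mkrod (fun n => f n.+1)) n = f n.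
  case=> [|[|k]] /=; first by rewrite /f F0.
    by rewrite /f F1 //; lia.
  by rewrite C_mkrod.
have fb : f b = 0.
  by rewrite /f /F /G subnn L0 -/d mulr0 subr0 -/U hx subrr.
have fb1 : f b.+1 = 0.
  rewrite /f /F /G.
  have -> : (b.+1 - a = d.+1)%N by rewrite /d; lia.
  have -> : (b.+1 - b = 1)%N by lia.
  rewrite L1 /y -/U; ring.
have frec : forall m, (b <= m)%N -> f m.+2 = e * f m.+1 + t%:Z * f m.
  move=> m hm; rewrite /f F_rec /sh.
  have -> : (m.+1 == a) = false by apply/negbTE/eqP; lia.
  have -> : (m.+1 == b) = false by apply/negbTE/eqP; lia.
  ring.
have fz : forall k, f (b + k)%N = 0 /\ f (b + k).+1 = 0.
  elim=> [|k [h1 h2]]; first by rewrite addn0.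
  by rewrite addnS; split=> //; rewrite frec ?h1 ?h2; [ring | lia].
have U0 : forall n, (0 < n)%N -> U n != 0 by move=> n hn; apply: Luc_neq0.
have x0 : x != 0.
  apply/eqP=> hx0; move: hx; rewrite hx0 mul0r => /esym/eqP; apply/negP/U0; lia.
have y0 : y != 0.
  have W := Luc_W e t%:Z a d.
  have ad : (a + d = b)%N by rewrite /d; lia.
  rewrite ad -/U -hx in W.
  have hy : y * U d = - ((- t%:Z) ^+ d) * U a by rewrite -W /y; ring.
  apply/eqP=> hy0; move: hy; rewrite hy0 mul0r => /esym/eqP.
  rewrite mulf_eq0 oppr_eq0 expf_eq0 oppr_eq0 eqz_nat (negbTE (U0 a ha)) orbF.
  by move/andP=> [_ /eqP]; lia.
split; last split.
- exists b => n hn; rewrite C_mkrod.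
  have := (fz (n.+1 - b)%N).1; rewrite subnKC //; lia.
- move=> n hn; rewrite C_mkrod /sh.
  have hab' : (a == b) = false by apply/negbTE/eqP; lia.
  case: (n =P a) => [->|na]; first by rewrite hab' addr0; split=> [_|_]; [left | apply/eqP].
  case: (n =P b) => [->|nb]; first by rewrite add0r; split=> [_|_]; [right | apply/eqP].
  by rewrite addr0; split=> // [[]].
- apply/step_iff => m; rewrite C_mkrod !fofQ /f F_rec; ring.
Qed.
Local Close Scope ring_scope.

Theorem mainTheorem18 (anti : bool) (s t : nat) :
  (0 < s)%N -> (0 < t)%N -> coprime s t ->
  forall a b : nat,
    ((1 <= a)%N /\ b = a.+1)
    \/ ((1 <= a)%N /\ b = a.+2 /\ (s = 1%N \/ ~~ odd a))
    \/ (exists d k : nat, (3 <= d)%N /\ (1 <= k)%N /\ a = (k * d)%N /\ b = (k.+1 * d)%N) ->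
  (exists Q S : rodset, rod_finite Q /\ has_shape2 S a b /\ rod_step (lucas anti s t) Q S)
  /\ (forall Q1 S1 Q2 S2 : rodset,
        rod_finite Q1 -> has_shape2 S1 a b -> rod_step (lucas anti s t) Q1 S1 ->
        rod_finite Q2 -> has_shape2 S2 a b -> rod_step (lucas anti s t) Q2 S2 ->
        rod_equiv S1 S2).
Proof.
move=> hs ht _ a b hyp.
suff [ha [hab hd]] : (0 < a)%N /\ (a < b)%N /\
    (Luc (ee anti s) t%:Z (b - a) %| Luc (ee anti s) t%:Z b)%Z.
  by split; [exact: exist_gen | exact: uniq_gen].
case: hyp => [[ha ->]|[[ha [-> hso]]|[d [k [hd [hk [-> ->]]]]]]].
- split=> //; split=> //; by rewrite subSnn dvd1z.
- split=> //; split=> //.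
  have -> : (a.+2 - a = 2)%N by lia.
  case: hso => [s1|ev].
    subst s; have -> : Luc (ee anti 1) t 2 = ee anti 1 by rewrite LSS L1 L0 mulr1 mulr0 addr0.
    rewrite /ee.
    by case: anti; rewrite ?dvd1z // dvdzE abszN dvd1n.
  have := Luc_dvd (ee anti s) t%:Z 2 (a./2).+1.
  have -> // : ((a./2).+1 * 2 = a.+2)%N.
  have := odd_double_half a; rewrite (negbTE ev) add0n -muln2 => ha2; lia.
- split; first by rewrite muln_gt0; lia.
  split; first by rewrite mulSn; lia.
  have -> : (k.+1 * d - k * d = d)%N by rewrite mulSn addnK.
  by apply: Luc_dvd.
Qed.
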